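(* A matrix $E\in \mathbb{C}^{m\times m}$ is idempotent ($E^2=E$) if and only if there exist positive integers $p,q$ and matrices $U\in \mathbb{C}^{m\times p}$, $V\in \mathbb{C}^{q\times m}$ such that $E=U(VU)^{\dagger}V$.
   Context: $A^{\dagger}$ denotes the Moore–Penrose inverse of a matrix $A$, i.e. the unique matrix $X$ with $AXA=A$, $XAX=X$, $(AX)^*=AX$, $(XA)^*=XA$, where $^*$ denotes conjugate transpose. *)

(* Defs.v *)
From HB Require Import structures.
From mathcomp Require Import all_boot all_order all_algebra.
From mathcomp.real_closed Require Import complex.
From Stdlib Require Import ClassicalEpsilon.
Set Implicit Arguments. Unset Strict Implicit. Unset Printing Implicit Defensive.
Import Order.TTheory GRing.Theory Num.Theory.
Local Open Scope ring_scope.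

Definition ctrmx (C : numClosedFieldType) (m n : nat) (A : 'M[C]_(m, n))
  : 'M[C]_(n, m) := map_mx Num.conj (A^T).

Definition is_MP (C : numClosedFieldType) (m n : nat)
  (A : 'M[C]_(m, n)) (X : 'M[C]_(n, m)) : Prop :=
  [/\ A *m X *m A = A, X *m A *m X = X,
      ctrmx (A *m X) = A *m X & ctrmx (X *m A) = X *m A].

Definition mpinv (C : numClosedFieldType) (m n : nat) (A : 'M[C]_(m, n))
  : 'M[C]_(n, m) := epsilon (inhabits 0) (fun X => is_MP A X).

(* Main.v *)
Require Import Defs.
From HB Require Import structures.
From mathcomp Require Import all_boot all_order all_algebra.
From mathcomp.real_closed Require Import complex.
From Stdlib Require Import ClassicalEpsilon.
From mathcomp Require Import zify.
Import Order.TTheory GRing.Theory Num.Theory.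
Local Open Scope ring_scope.

Section MP.
Variable C : numClosedFieldType.

Lemma ctrmx_mul m n p (A : 'M[C]_(m, n)) (B : 'M[C]_(n, p)) :
  ctrmx (A *m B) = ctrmx B *m ctrmx A.
Proof. by rewrite /ctrmx trmx_mul map_mxM. Qed.

Lemma ctrmxK m n (A : 'M[C]_(m, n)) : ctrmx (ctrmx A) = A.
Proof. by apply/matrixP=> i j; rewrite /ctrmx !mxE conjCK. Qed.

Lemma ctrmx_inv n (A : 'M[C]_n) : ctrmx (invmx A) = invmx (ctrmx A).
Proof. by rewrite /ctrmx trmx_inv map_invmx. Qed.

Lemma mxrank_ctr m n (A : 'M[C]_(m, n)) : \rank (ctrmx A) = \rank A.
Proof. by rewrite /ctrmx mxrank_map mxrank_tr. Qed.

Lemma mul_ctr_eq0 m n (W : 'M[C]_(m, n)) : W *m ctrmx W = 0 -> W = 0.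
Proof.
move=> H; apply/matrixP=> i j; rewrite mxE.
move/matrixP/(_ i i): H; rewrite !mxE => Hs.
have Hs' : \sum_k `|W i k| ^+ 2 = 0.
  by rewrite -[X in _ = X]Hs; apply: eq_bigr => k _; rewrite !mxE normCK.
have Hz := psumr_eq0P (fun k _ => exprn_ge0 2 (normr_ge0 (W i k))) Hs'.
by apply/eqP; rewrite -normr_eq0 -sqrf_eq0 (Hz j).
Qed.

Lemma rank_mul_ctr m n (M : 'M[C]_(m, n)) : \rank (M *m ctrmx M) = \rank M.
Proof.
apply/eqP; rewrite eqn_leq mxrankM_maxl /=.
have Hk : (kermx (M *m ctrmx M) <= kermx M)%MS.
  apply/sub_kermxP; apply: mul_ctr_eq0.
  by rewrite ctrmx_mul mulmxA -[_ *m M *m _]mulmxA mulmx_ker mul0mx.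
have := mxrankS Hk; rewrite !mxrank_ker.
have := rank_leq_row M; have := rank_leq_row (M *m ctrmx M).
lia.
Qed.

Lemma MP_fact m n r (B : 'M[C]_(m, r)) (D : 'M[C]_(r, n)) :
  (D *m ctrmx D) \in unitmx -> (ctrmx B *m B) \in unitmx ->
  exists X, is_MP (B *m D) X.
Proof.
set P := D *m ctrmx D; set Q := ctrmx B *m B => uP uQ.
have hP : ctrmx P = P by rewrite /P ctrmx_mul ctrmxK.
have hQ : ctrmx Q = Q by rewrite /Q ctrmx_mul ctrmxK.
exists (ctrmx D *m invmx P *m invmx Q *m ctrmx B).
have eAX : B *m D *m (ctrmx D *m invmx P *m invmx Q *m ctrmx B) = B *m invmx Q *m ctrmx B.
  by rewrite !mulmxA -(mulmxA B D) -/P mulmxK.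
have eXA : (ctrmx D *m invmx P *m invmx Q *m ctrmx B) *m (B *m D) = ctrmx D *m invmx P *m D.
  by rewrite !mulmxA -(mulmxA _ (ctrmx B) B) -/Q mulmxKV // -!mulmxA.
split.
- by rewrite eAX !mulmxA -(mulmxA _ (ctrmx B) B) -/Q mulmxKV.
- by rewrite eXA !mulmxA -(mulmxA _ D (ctrmx D)) -/P mulmxKV // -!mulmxA.
- by rewrite eAX !ctrmx_mul ctrmxK ctrmx_inv hQ mulmxA.
- by rewrite eXA !ctrmx_mul ctrmxK ctrmx_inv hP mulmxA.
Qed.

Lemma MP_exists m n (A : 'M[C]_(m, n)) : exists X, is_MP A X.
Proof.
rewrite -(mulmx_base A); apply: MP_fact.
  by rewrite -row_free_unit /row_free rank_mul_ctr; exact: row_base_free.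
have -> : ctrmx (col_base A) *m col_base A =
    ctrmx (col_base A) *m ctrmx (ctrmx (col_base A)) by rewrite ctrmxK.
rewrite -row_free_unit /row_free rank_mul_ctr mxrank_ctr.
exact: col_base_full.
Qed.

Lemma mpinvP {m n} (A : 'M[C]_(m, n)) : is_MP A (mpinv A).
Proof. rewrite /mpinv; apply: (epsilon_spec (inhabits 0) (fun X => is_MP A X)); exact: MP_exists. Qed.

End MP.
Arguments mpinvP {C m n} A.

Theorem proposition2 (R : rcfType) (m : nat) (E : 'M[R[i]]_m) :
  E *m E = E <->
  exists (p q : nat) (U : 'M[R[i]]_(m, p)) (V : 'M[R[i]]_(q, m)),
    [/\ (0 < p)%N, (0 < q)%N & E = U *m mpinv (V *m U) *m V].
Proof.
split.
- case: m E => [|n] E hE.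
    exists 1%N, 1%N, 0, 0; split => //; apply/matrixP => i; case: i => ? //.
  exists n.+1, n.+1, E, E; split => //.
  by rewrite hE; case: (mpinvP E) => ->.
- case=> p [q [U [V [_ _ ->]]]].
  case: (mpinvP (V *m U)) => _ h _ _.
  by set X := mpinv (V *m U) in h *; rewrite !mulmxA -(mulmxA (U *m X) V U) -(mulmxA U X (V *m U)) -(mulmxA U (X *m (V *m U)) X) h.
Qed.
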